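(* Let $\mathcal H=\mathbb C^2$ with basis $I=\{|0\rangle,|1\rangle\}$ (the $\sigma_z$ eigenbasis), and let $\rho=\frac12(\mathbb 1+n_x\sigma_x+n_y\sigma_y+n_z\sigma_z)$ be any qubit density matrix ($n_x^2+n_y^2+n_z^2\le1$). Define $C_z(\rho)=\sqrt{n_x^2+n_y^2}$. Then $$R_I(\rho)=h\!\left(\frac{1+\sqrt{1-C_z(\rho)^2}}{2}\right),$$ where $h(p)=-p\log_2p-(1-p)\log_2(1-p)$ is the binary entropy. Moreover $C_z(\rho)=|\sqrt{\eta_1}-\sqrt{\eta_2}|$, where $\eta_1,\eta_2$ are the eigenvalues of $\rho\,\sigma_x\rho^*\sigma_x$ ($\rho^*$ the entrywise complex conjugate in basis $I$), and $C_z(\rho)=C_{l_1}(\rho):=|\langle0|\rho|1\rangle|+|\langle1|\rho|0\rangle|$.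
   Context: $\sigma_x,\sigma_y,\sigma_z$ are the Pauli matrices. For a density matrix $\rho$, let $\rho^{\mathrm{diag}}=\sum_i\langle i|\rho|i\rangle\,|i\rangle\langle i|$. For a pure state $|\psi\rangle=\sum_ia_i|i\rangle$ define $R_I(|\psi\rangle)=S\big((|\psi\rangle\langle\psi|)^{\mathrm{diag}}\big)=-\sum_i|a_i|^2\log_2|a_i|^2$, where $S$ is the von Neumann entropy. For a general density matrix $\rho$ define $R_I(\rho)=\min\sum_ep_eR_I(|\psi_e\rangle)$, the minimum over all finite pure-state decompositions $\rho=\sum_ep_e|\psi_e\rangle\langle\psi_e|$ with $p_e>0$, $\sum_ep_e=1$. *)

(* Defs.v *)
From Stdlib Require Import Reals Lra List.
Open Scope R_scope.

Definition Cx : Type := (R * R)%type.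
Definition Cre (z : Cx) : R := fst z.
Definition Cim (z : Cx) : R := snd z.
Definition RtoC (x : R) : Cx := (x, 0).
Definition C0 : Cx := (0, 0).
Definition C1 : Cx := (1, 0).
Definition Ci : Cx := (0, 1).
Definition Cadd (z w : Cx) : Cx := (fst z + fst w, snd z + snd w).
Definition Copp (z : Cx) : Cx := (- fst z, - snd z).
Definition Csub (z w : Cx) : Cx := Cadd z (Copp w).
Definition Cmul (z w : Cx) : Cx :=
  (fst z * fst w - snd z * snd w, fst z * snd w + snd z * fst w).
Definition Cconj (z : Cx) : Cx := (fst z, - snd z).
Definition Cnorm2 (z : Cx) : R := fst z * fst z + snd z * snd z.
Definition Cnorm (z : Cx) : R := sqrt (Cnorm2 z).

(* ---------- qubit vectors and 2x2 matrices (index false = |0>, true = |1>) ---------- *)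
Definition Vec2 : Type := bool -> Cx.
Definition Mat2 : Type := bool -> bool -> Cx.

Definition madd (A B : Mat2) : Mat2 := fun i j => Cadd (A i j) (B i j).
Definition mscale (c : Cx) (A : Mat2) : Mat2 := fun i j => Cmul c (A i j).
Definition mmul (A B : Mat2) : Mat2 :=
  fun i j => Cadd (Cmul (A i false) (B false j)) (Cmul (A i true) (B true j)).
Definition mconj (A : Mat2) : Mat2 := fun i j => Cconj (A i j).
Definition mid : Mat2 := fun i j => if Bool.eqb i j then C1 else C0.
Definition mdet (A : Mat2) : Cx :=
  Csub (Cmul (A false false) (A true true)) (Cmul (A false true) (A true false)).

Definition sigma_x : Mat2 := fun i j => if Bool.eqb i j then C0 else C1.
Definition sigma_y : Mat2 := fun i j =>
  match i, j with
  | false, true => Copp Ci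
  | true, false => Ci
  | _, _ => C0
  end.
Definition sigma_z : Mat2 := fun i j =>
  match i, j with
  | false, false => C1
  | true, true => Copp C1
  | _, _ => C0
  end.

Definition bloch (nx ny nz : R) : Mat2 :=
  mscale (RtoC (1/2))
    (madd mid (madd (mscale (RtoC nx) sigma_x)
                (madd (mscale (RtoC ny) sigma_y) (mscale (RtoC nz) sigma_z)))).

Definition log2 (x : R) : R := ln x / ln 2.
Definition negxlogx (x : R) : R := if Rle_dec x 0 then 0 else - (x * log2 x).
Definition h (p : R) : R := negxlogx p + negxlogx (1 - p).

(* R_I(|psi>) = S((|psi><psi|)^diag) = - sum_i |a_i|^2 log2 |a_i|^2 *)
Definition RI_pure (psi : Vec2) : R :=
  negxlogx (Cnorm2 (psi false)) + negxlogx (Cnorm2 (psi true)).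

Definition is_unit_vec (psi : Vec2) : Prop :=
  Cnorm2 (psi false) + Cnorm2 (psi true) = 1.

Definition ens_mat (d : list (R * Vec2)) : Mat2 := fun i j =>
  fold_right (fun e acc => Cadd (Cmul (RtoC (fst e)) (Cmul (snd e i) (Cconj (snd e j)))) acc)
             C0 d.

Definition is_decomposition (rho : Mat2) (d : list (R * Vec2)) : Prop :=
  (forall e, In e d -> 0 < fst e /\ is_unit_vec (snd e)) /\
  fold_right (fun e acc => fst e + acc) 0 d = 1 /\
  (forall i j, ens_mat d i j = rho i j).

Definition avg_RI (d : list (R * Vec2)) : R :=
  fold_right (fun e acc => fst e * RI_pure (snd e) + acc) 0 d.

Definition RI_is (rho : Mat2) (v : R) : Prop :=
  (exists d, is_decomposition rho d /\ avg_RI d = v) /\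
  (forall d, is_decomposition rho d -> v <= avg_RI d).

Definition Cz (nx ny nz : R) : R := sqrt (nx ^ 2 + ny ^ 2).

Definition Cl1 (rho : Mat2) : R := Cnorm (rho false true) + Cnorm (rho true false).

(* eta1, eta2 are the eigenvalues (with multiplicity) of A:
   det(lambda 1 - A) = (lambda - eta1)(lambda - eta2) for all lambda *)
Definition eigenpair (A : Mat2) (eta1 eta2 : Cx) : Prop :=
  forall lam : Cx,
    mdet (madd (mscale lam mid) (mscale (Copp C1) A)) = Cmul (Csub lam eta1) (Csub lam eta2).

(* Main.v *)
Require Import Defs.
From Stdlib Require Import Reals Lra List.
From Coquelicot Require Coquelicot.
Open Scope R_scope.

Module An.
Import Coquelicot.Coquelicot.


Lemma MVT_strict (f df : R -> R) (a b : R) : a < b ->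
  (forall x, a < x < b -> is_derive f x (df x)) ->
  (forall x, a <= x <= b -> continuity_pt f x) ->
  exists c, a < c < b /\ f b - f a = df c * (b - a).
Proof.
  intros Hab Hd Hc.
  assert (pr1 : forall c, a < c < b -> derivable_pt f c).
  { intros c Pc. exists (df c). apply is_derive_Reals. now apply Hd. }
  assert (pr2 : forall c, a < c < b -> derivable_pt id c).
  { intros c Pc. exists 1. apply derivable_pt_lim_id. }
  destruct (MVT f id a b pr1 pr2 Hab Hc) as [c [P HP]].
  { intros; apply derivable_continuous_pt, derivable_pt_id. }
  exists c; split; [exact P|].
  assert (E1 : derive_pt f c (pr1 c P) = df c).
  { apply derive_pt_eq_0. apply is_derive_Reals. now apply Hd. }
  assert (E2 : derive_pt id c (pr2 c P) = 1).
  { apply derive_pt_eq_0. apply derivable_pt_lim_id. }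
  rewrite E1, E2 in HP. unfold id in HP. lra.
Qed.

Definition Lf (s:R) := (ln (1+s) - ln (1-s))/2.

Lemma Lf_ge s : 0 <= s < 1 -> s <= Lf s.
Proof.
  intros Hs.
  destruct (Req_dec s 0) as [->|Hs0].
  { unfold Lf. rewrite Rplus_0_r, Rminus_0_r. lra. }
  destruct (MVT_cor2 (fun x => Lf x - x) (fun x => 1/(1-x^2) - 1) 0 s) as [c [Hc1 Hc2]].
  - lra.
  - intros c Hc. apply is_derive_Reals. unfold Lf.
    auto_derive.
    + repeat split; lra.
    + field. repeat split; try lra. 
      intro H. assert ((1-c)*(1+c) = 0) by (ring_simplify; lra).
      apply Rmult_integral in H0; lra.
  - assert (Lf 0 = 0) by (unfold Lf; rewrite Rplus_0_r, Rminus_0_r; lra).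
    rewrite H in Hc1.
    assert (0 <= 1/(1-c^2) - 1).
    { assert (0 < 1 - c^2 <= 1) by nra.
      apply Rge_le, Rge_minus, Rle_ge. unfold Rdiv. rewrite Rmult_1_l.
      rewrite <- Rinv_1. apply Rinv_le_contravar; lra. }
    nra.
Qed.

Definition om (s:R) := (1 - s^2) * Lf s ^2 / s^2.

Lemma Lf_nonneg s : 0 <= s < 1 -> 0 <= Lf s.
Proof. intros; pose proof (Lf_ge s H); lra. Qed.

Lemma om_decr a b : 0 < a -> a <= b -> b < 1 -> om b <= om a.
Proof.
  intros Ha Hab Hb.
  destruct (Req_dec a b) as [<-|Hne]; [lra|].
  destruct (MVT_cor2 om (fun s => 2 * Lf s * (s - Lf s) / s^3) a b) as [c [Hc1 Hc2]].
  - lra.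
  - intros c Hc. apply is_derive_Reals. unfold om, Lf.
    auto_derive.
    + repeat split; try lra. nra.
    + replace (1 + - c) with (1 - c) by ring.
      set (L1 := ln (1+c)). set (L2 := ln (1-c)). field. repeat split; try lra.
  - assert (0 <= Lf c) by (apply Lf_nonneg; lra).
    assert (c <= Lf c) by (apply Lf_ge; lra).
    assert (2 * Lf c * (c - Lf c) / c^3 <= 0).
    { unfold Rdiv. apply Rmult_le_0_r.
      - assert (Lf c * (c - Lf c) <= 0) by (assert (0 <= Lf c * (Lf c - c)) by (apply Rmult_le_pos; lra); nra). lra.
      - left. apply Rinv_0_lt_compat. apply pow_lt. lra. }
    nra.
Qed.

Definition N (x:R) := - (x * ln x).

Lemma ln_le_xm1 z : 0 < z -> ln z <= z - 1.
Proof.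
  intros Hz. pose proof (exp_ineq1_le (ln z)). rewrite exp_ln in H; lra.
Qed.

Lemma N_nonpos_arg y : y <= 0 -> N y = 0.
Proof.
  intros Hy. unfold N, ln. destruct (Rlt_dec 0 y) as [h|h]. { exfalso; apply (Rlt_not_le _ _ h Hy). } ring.
Qed.

Lemma N_bound y : 0 < y -> N y <= 2 * sqrt y.
Proof.
  intros Hy. set (w := sqrt y).
  assert (Hw : 0 < w) by (apply sqrt_lt_R0; lra).
  assert (Hyw : y = w * w) by (unfold w; rewrite sqrt_sqrt; lra).
  unfold N. rewrite Hyw, ln_mult by lra.
  pose proof (ln_le_xm1 (/ w) (Rinv_0_lt_compat _ Hw)).
  rewrite ln_Rinv in H by lra.
  assert (- ln w * w <= (/ w - 1) * w) by (apply Rmult_le_compat_r; lra).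
  rewrite Rmult_minus_distr_r, Rinv_l in H0 by lra. nra.
Qed.

Lemma N_nonneg y : 0 <= y <= 1 -> 0 <= N y.
Proof.
  intros Hy. destruct (Req_dec y 0) as [->|H0].
  - rewrite N_nonpos_arg; lra.
  - unfold N. assert (ln y <= 0).
    { destruct (Req_dec y 1) as [->|H1]; [rewrite ln_1; lra|].
      left. rewrite <- ln_1. apply ln_increasing; lra. }
    nra.
Qed.

Lemma N_cont0 : continuity_pt N 0.
Proof.
  unfold continuity_pt, continue_in, limit1_in, limit_in. intros eps Heps.
  exists (Rmin ((eps/2)^2) 1). split.
  { apply Rmin_pos; [apply pow_lt|]; lra. }
  intros x [_ Hx]. simpl in *. unfold R_dist in *.
  rewrite (N_nonpos_arg 0) by lra. rewrite Rminus_0_r in *.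
  destruct (Rle_dec x 0) as [Hx0|Hx0].
  - rewrite N_nonpos_arg by lra. rewrite Rabs_R0; lra.
  - pose proof (Rmin_r (eps / 2 * (eps / 2 * 1)) 1). pose proof (Rmin_l (eps / 2 * (eps / 2 * 1)) 1).
    rewrite Rabs_right in Hx by lra.
    assert (Hx1 : x < 1) by lra.
    assert (Hx2 : x < (eps/2)^2) by (simpl; lra).
    rewrite Rabs_right by (apply Rle_ge, N_nonneg; lra).
    pose proof (N_bound x ltac:(lra)).
    assert (sqrt x < eps/2).
    { rewrite <- (sqrt_pow2 (eps/2)) by lra. apply sqrt_lt_1_alt. lra. }
    lra.
Qed.

Definition Hs (s:R) := N ((1+s)/2) + N ((1-s)/2).
Definition kt (t:R) := sqrt (1 - t^2) * Lf t / t.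
Definition Phi (k s : R) := Hs s - k * sqrt (1 - s^2).

Lemma Phi_deriv k x : -1 < x < 1 ->
  is_derive (Phi k) x (- Lf x + k * x / sqrt (1 - x^2)).
Proof.
  intros Hx. unfold Phi, Hs, N, Lf.
  assert (H1 : 0 < 1 - x^2) by nra.
  assert (Hq : 0 < sqrt (1 - x^2)) by (apply sqrt_lt_R0; lra).
  auto_derive.
  - repeat split; lra.
  - replace (1 + - x) with (1 - x) by ring.
    replace (1 + - (x * (x * 1))) with (1 - x^2) by ring.
    assert (E1 : ln ((1+x) * / 2) = ln (1+x) - ln 2) by (apply ln_div; lra).
    assert (E2 : ln ((1-x) * / 2) = ln (1-x) - ln 2) by (apply ln_div; lra).
    rewrite E1, E2.
    field. repeat split; lra.
Qed.

Lemma cont_of_derive f df x : is_derive f x df -> continuity_pt f x.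
Proof.
  intros H. apply derivable_continuous_pt. exists df. now apply is_derive_Reals.
Qed.

Lemma Phi_cont k x : 0 <= x <= 1 -> continuity_pt (Phi k) x.
Proof.
  intros Hx. destruct (Req_dec x 1) as [->|H1].
  2: { eapply cont_of_derive, Phi_deriv; lra. }
  unfold Phi, Hs.
  apply continuity_pt_minus. apply continuity_pt_plus.
  - eapply cont_of_derive. unfold N. auto_derive; [lra|reflexivity].
  - apply (continuity_pt_comp (fun s => (1 - s)/2) N).
    + eapply cont_of_derive. auto_derive; try easy; reflexivity.
    + replace ((1-1)/2) with 0 by field. apply N_cont0.
  - apply continuity_pt_mult. apply continuity_pt_const. intros a b; easy.
    apply (continuity_pt_comp (fun s => 1 - s^2) sqrt).
    + eapply cont_of_derive. auto_derive; try easy; reflexivity.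
    + apply continuity_pt_sqrt. lra.
Qed.

Lemma kt_nonneg t : 0 < t < 1 -> 0 <= kt t.
Proof.
  intros Ht. unfold kt. unfold Rdiv. apply Rmult_le_pos.
  - apply Rmult_le_pos; [apply sqrt_pos| apply Lf_nonneg; lra].
  - left; apply Rinv_0_lt_compat; lra.
Qed.

Lemma kt_sq t : 0 < t < 1 -> kt t ^ 2 = om t.
Proof.
  intros Ht. unfold kt, om.
  assert (0 <= 1 - t^2) by nra.
  replace ((sqrt (1 - t ^ 2) * Lf t / t) ^ 2) with ((sqrt (1 - t^2))^2 * Lf t ^2 / t^2) by (field; lra).
  rewrite pow2_sqrt by lra. reflexivity.
Qed.

Lemma sign_key t x : 0 < t < 1 -> 0 < x < 1 ->
  (t <= x -> Lf x <= kt t * x / sqrt (1 - x^2)) /\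
  (x <= t -> kt t * x / sqrt (1 - x^2) <= Lf x).
Proof.
  intros Ht Hx.
  assert (H1 : 0 < 1 - x^2) by nra.
  set (q := sqrt (1 - x^2)).
  assert (Hq : 0 < q) by (apply sqrt_lt_R0; lra).
  assert (Hq2 : q^2 = 1 - x^2) by (unfold q; apply pow2_sqrt; lra).
  assert (HL : 0 <= Lf x) by (apply Lf_nonneg; lra).
  assert (Hk : 0 <= kt t) by (apply kt_nonneg; lra).
  assert (Hom : om x * x^2 = (q * Lf x)^2) by (unfold om; rewrite <- Hq2; field; lra).
  assert (Hk2 := kt_sq t Ht).
  assert (Hx2 : 0 < x^2) by nra.
  split; intros Hle.
  - assert (om x <= om t) by (apply om_decr; lra).
    assert ((q * Lf x)^2 <= (kt t * x)^2) by (rewrite <- Hom; rewrite Rpow_mult_distr, Hk2; nra).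
    assert (q * Lf x <= kt t * x).
    { assert (0 <= q * Lf x) by nra. assert (0 <= kt t * x) by nra. nra. }
    apply (Rmult_le_reg_r q); [lra|]. unfold Rdiv. rewrite Rmult_assoc, Rinv_l by lra. lra.
  - assert (om t <= om x) by (apply om_decr; lra).
    assert ((kt t * x)^2 <= (q * Lf x)^2) by (rewrite <- Hom; rewrite Rpow_mult_distr, Hk2; nra).
    assert (kt t * x <= q * Lf x).
    { assert (0 <= q * Lf x) by nra. assert (0 <= kt t * x) by nra. nra. }
    apply (Rmult_le_reg_r q); [lra|]. unfold Rdiv. rewrite Rmult_assoc, Rinv_l by lra. lra.
Qed.

Lemma tangent t s : 0 < t < 1 -> 0 <= s <= 1 ->
  Hs t + kt t * (sqrt (1 - s^2) - sqrt (1 - t^2)) <= Hs s.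
Proof.
  intros Ht Hs0.
  assert (Phi (kt t) t <= Phi (kt t) s).
  { destruct (Rtotal_order s t) as [Hlt|[Heq|Hgt]].
    - destruct (MVT_strict (Phi (kt t)) (fun x => - Lf x + kt t * x / sqrt (1 - x^2)) s t Hlt)
        as [c [Hc1 Hc2]].
      + intros; apply Phi_deriv; lra.
      + intros; apply Phi_cont; lra.
      + destruct (sign_key t c Ht ltac:(lra)) as [_ Hs2].
        specialize (Hs2 ltac:(lra)). nra.
    - subst; lra.
    - destruct (MVT_strict (Phi (kt t)) (fun x => - Lf x + kt t * x / sqrt (1 - x^2)) t s Hgt)
        as [c [Hc1 Hc2]].
      + intros; apply Phi_deriv; lra.
      + intros; apply Phi_cont; lra.
      + destruct (sign_key t c Ht ltac:(lra)) as [Hs2 _].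
        specialize (Hs2 ltac:(lra)). nra. }
  unfold Phi in H. lra.
Qed.

End An.


Lemma pair_eq (a b c d : R) : a = c -> b = d -> (a, b) = (c, d).
Proof. intros; subst; reflexivity. Qed.

Definition bl (nx ny nz : R) (i j : bool) : Cx :=
  match i, j with
  | false, false => ((1+nz)/2, 0)
  | false, true => (nx/2, - ny/2)
  | true, false => (nx/2, ny/2)
  | true, true => ((1-nz)/2, 0)
  end.

Lemma bloch_bl nx ny nz i j : bloch nx ny nz i j = bl nx ny nz i j.
Proof.
  destruct i, j; unfold bloch, bl, mscale, madd, mid, sigma_x, sigma_y, sigma_z,
    RtoC, Cmul, Cadd, Copp, Ci, C1, C0; simpl; apply pair_eq; field.
Qed.

Lemma sumsq_nonneg x y : 0 <= x*x + y*y.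
Proof. nra. Qed.

Lemma Cnorm2_nonneg z : 0 <= Cnorm2 z.
Proof. unfold Cnorm2. nra. Qed.

Lemma Cnorm_mul z w : Cnorm (Cmul z w) = Cnorm z * Cnorm w.
Proof.
  unfold Cnorm. rewrite <- sqrt_mult by apply Cnorm2_nonneg. f_equal.
  destruct z, w; unfold Cnorm2, Cmul; simpl; ring.
Qed.

Lemma Cnorm_conj z : Cnorm (Cconj z) = Cnorm z.
Proof. unfold Cnorm, Cnorm2, Cconj; simpl. f_equal; ring. Qed.

Lemma Cnorm_RtoC p : 0 <= p -> Cnorm (RtoC p) = p.
Proof.
  intros. unfold Cnorm, Cnorm2, RtoC; simpl. rewrite Rmult_0_l, Rplus_0_r.
  apply sqrt_square; lra.
Qed.

Lemma Cnorm_add z w : Cnorm (Cadd z w) <= Cnorm z + Cnorm w.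
Proof.
  destruct z as [a b], w as [c d]. unfold Cnorm, Cnorm2, Cadd; simpl.
  assert (0 <= a*a+b*b) by nra. assert (0 <= c*c+d*d) by nra.
  pose proof (sqrt_pos (a*a+b*b)). pose proof (sqrt_pos (c*c+d*d)).
  apply Rsqr_incr_0_var; [|lra].
  unfold Rsqr. assert (0 <= (a+c)*(a+c)+(b+d)*(b+d)) by apply sumsq_nonneg. rewrite (sqrt_sqrt ((a+c)*(a+c)+(b+d)*(b+d))) by exact H3.
  replace ((sqrt (a * a + b * b) + sqrt (c * c + d * d)) *
     (sqrt (a * a + b * b) + sqrt (c * c + d * d))) with
     (sqrt (a * a + b * b) * sqrt (a * a + b * b) + sqrt (c * c + d * d) * sqrt (c * c + d * d)
      + 2 * (sqrt (a * a + b * b) * sqrt (c * c + d * d))) by ring.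
  rewrite !sqrt_sqrt by nra. rewrite <- sqrt_mult by assumption.
  assert (a*c+b*d <= sqrt ((a * a + b * b) * (c * c + d * d))).
  { destruct (Rle_dec (a*c+b*d) 0); [pose proof (sqrt_pos ((a * a + b * b) * (c * c + d * d))); lra|].
    apply Rsqr_incr_0_var; [|apply sqrt_pos]. unfold Rsqr. rewrite sqrt_sqrt by (apply Rmult_le_pos; assumption).
    pose proof (Rle_0_sqr (a*d-b*c)). unfold Rsqr in *. nra. }
  nra.
Qed.

Lemma Cnorm_nonneg z : 0 <= Cnorm z.
Proof. apply sqrt_pos. Qed.

Lemma Cmul_zero z w : Cmul z w = C0 -> z = C0 \/ w = C0.
Proof.
  destruct z as [a b], w as [c d]. unfold Cmul, C0; simpl. intros H.
  injection H as H1 H2.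
  assert (E : (a*a+b*b)*(c*c+d*d) = 0) by nra.
  apply Rmult_integral in E. destruct E as [E|E].
  - left. apply pair_eq; nra.
  - right. apply pair_eq; nra.
Qed.

Notation N := An.N.
Notation Hs := An.Hs.

Lemma ln2_pos : 0 < ln 2.
Proof. rewrite <- ln_1. apply ln_increasing; lra. Qed.

Lemma negx_N x : negxlogx x = N x / ln 2.
Proof.
  pose proof ln2_pos.
  unfold negxlogx, log2. destruct (Rle_dec x 0).
  - rewrite An.N_nonpos_arg by lra. field. lra.
  - unfold An.N. field. lra.
Qed.

Lemma h_Hs t : h ((1+t)/2) = Hs t / ln 2.
Proof.
  pose proof ln2_pos.
  unfold h, An.Hs. rewrite !negx_N. replace (1 - (1+t)/2) with ((1-t)/2) by field. field. lra.
Qed.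

Lemma Hs_even s : Hs (-s) = Hs s.
Proof. unfold An.Hs. replace (1 - - s) with (1 + s) by ring. replace (1 + - s) with (1 - s) by ring. ring. Qed.

Lemma RI_pure_N psi : RI_pure psi = (N (Cnorm2 (psi false)) + N (Cnorm2 (psi true))) / ln 2.
Proof. pose proof ln2_pos. unfold RI_pure. rewrite !negx_N. field. lra. Qed.

Lemma sqrt_4x x : 0 <= x -> sqrt (4 * x) = 2 * sqrt x.
Proof.
  intros. rewrite sqrt_mult_alt by lra. f_equal.
  replace 4 with (2^2) by ring. apply sqrt_pow2. lra.
Qed.

Definition sel (psi : Vec2) := Rabs (2 * Cnorm2 (psi false) - 1).

Lemma unit_elem psi : is_unit_vec psi ->
  0 <= sel psi <= 1 /\ Hs (sel psi) = N (Cnorm2 (psi false)) + N (Cnorm2 (psi true)) /\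
  sqrt (1 - sel psi ^2) = 2 * Cnorm (psi false) * Cnorm (psi true).
Proof.
  unfold is_unit_vec, sel. intros Hu. set (q := Cnorm2 (psi false)) in *.
  pose proof (Cnorm2_nonneg (psi false)). pose proof (Cnorm2_nonneg (psi true)).
  fold q in Hu, H.
  assert (Hq1 : Cnorm2 (psi true) = 1 - q) by lra. rewrite Hq1.
  split; [|split].
  - split; [apply Rabs_pos|]. apply Rabs_le. lra.
  - unfold An.Hs. destruct (Rle_dec 0 (2*q-1)).
    + rewrite Rabs_right by lra. replace ((1 + (2*q-1))/2) with q by field.
      replace ((1 - (2*q-1))/2) with (1-q) by field. reflexivity.
    + rewrite Rabs_left by lra. replace ((1 + - (2*q-1))/2) with (1-q) by field.
      replace ((1 - - (2*q-1))/2) with q by field. ring.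
  - rewrite pow2_abs.
    replace (1 - (2 * q - 1) ^ 2) with (4 * (q * (1 - q))) by ring.
    rewrite sqrt_4x by nra. unfold Cnorm. fold q. rewrite Hq1, sqrt_mult by lra. ring.
Qed.

Definition sump (d : list (R * Vec2)) := fold_right (fun e acc => fst e + acc) 0 d.
Definition wsum (g : Vec2 -> R) (d : list (R * Vec2)) :=
  fold_right (fun e acc => fst e * g (snd e) + acc) 0 d.

Lemma wsum_lower d (F g : Vec2 -> R) A k r :
  (forall e, In e d -> 0 < fst e /\ A + k * (g (snd e) - r) <= F (snd e)) ->
  A * sump d + k * (wsum g d - r * sump d) <= wsum F d.
Proof.
  induction d as [|e d IH]; intros H; simpl.
  - lra.
  - destruct (H e (or_introl eq_refl)) as [Hp He].
    assert (IH' := IH (fun e' He' => H e' (or_intror He'))).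
    assert (fst e * (A + k * (g (snd e) - r)) <= fst e * F (snd e)) by (apply Rmult_le_compat_l; lra).
    unfold sump, wsum in *. simpl. nra.
Qed.

Lemma wsum_nonneg d g :
  (forall e, In e d -> 0 < fst e /\ 0 <= g (snd e)) -> 0 <= wsum g d.
Proof.
  induction d as [|e d IH]; intros H; unfold wsum in *; simpl.
  - lra.
  - destruct (H e (or_introl eq_refl)) as [Hp He].
    assert (IH' := IH (fun e' He' => H e' (or_intror He'))).
    assert (0 <= fst e * g (snd e)) by (apply Rmult_le_pos; lra). lra.
Qed.

Lemma wsum_zero d g :
  (forall e, In e d -> 0 < fst e /\ 0 <= g (snd e)) -> wsum g d <= 0 ->
  forall e, In e d -> g (snd e) = 0.
Proof.
  induction d as [|e d IH]; intros H Hs e' He'.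
  - destruct He'.
  - destruct (H e (or_introl eq_refl)) as [Hp He].
    assert (H' : forall e', In e' d -> 0 < fst e' /\ 0 <= g (snd e')) by (intros; apply H; now right).
    pose proof (wsum_nonneg d g H').
    assert (0 <= fst e * g (snd e)) by (apply Rmult_le_pos; lra).
    unfold wsum in Hs; simpl in Hs; fold (wsum g d) in Hs.
    destruct He' as [<-|He'].
    + assert (fst e * g (snd e) = 0) by lra. apply Rmult_integral in H2. lra.
    + apply (IH H'); [lra|assumption].
Qed.

Lemma wsum_1m d g : wsum (fun psi => 1 - g psi) d = sump d - wsum g d.
Proof. induction d; unfold wsum, sump in *; simpl; [ring|]. rewrite IHd. ring. Qed.

Lemma wsum_scal d g c : wsum (fun psi => c * g psi) d = c * wsum g d.
Proof. induction d; unfold wsum in *; simpl; [ring|]. rewrite IHd. ring. Qed.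

Lemma norm_ens d :
  (forall e, In e d -> 0 <= fst e) ->
  Cnorm (ens_mat d false true) <= wsum (fun psi => Cnorm (psi false) * Cnorm (psi true)) d.
Proof.
  induction d as [|e d IH]; intros H; unfold ens_mat, wsum in *; simpl.
  - unfold Cnorm, Cnorm2, C0; simpl. rewrite Rmult_0_l, Rplus_0_r, sqrt_0. lra.
  - eapply Rle_trans; [apply Cnorm_add|].
    rewrite !Cnorm_mul, Cnorm_conj, Cnorm_RtoC by (apply H; now left).
    assert (IH' := IH (fun e' He' => H e' (or_intror He'))). 
    apply Rplus_le_compat_l. exact IH'.
Qed.

Definition Gc (psi : Vec2) := 2 * (Cnorm (psi false) * Cnorm (psi true)).

Lemma sqrt_div4 x : 0 <= x -> sqrt (x / 4) = sqrt x / 2.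
Proof.
  intros. replace x with (4 * (x/4)) at 2 by field. rewrite sqrt_4x by lra. field.
Qed.

Lemma Cnorm_half nx ny : Cnorm (nx/2, - ny/2) = sqrt (nx^2+ny^2) / 2.
Proof.
  unfold Cnorm, Cnorm2; simpl. rewrite <- sqrt_div4 by nra. f_equal. field.
Qed.

Lemma Cnorm_half' nx ny : Cnorm (nx/2, ny/2) = sqrt (nx^2+ny^2) / 2.
Proof.
  unfold Cnorm, Cnorm2; simpl. rewrite <- sqrt_div4 by nra. f_equal. field.
Qed.

Lemma RI_sel psi : is_unit_vec psi -> RI_pure psi = Hs (sel psi) / ln 2.
Proof. intros H. destruct (unit_elem psi H) as [_ [E _]]. rewrite RI_pure_N, E. reflexivity. Qed.

Lemma Gc_sel psi : is_unit_vec psi -> Gc psi = sqrt (1 - sel psi ^ 2).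
Proof. intros H. destruct (unit_elem psi H) as [_ [_ E]]. rewrite E. unfold Gc. ring. Qed.

Lemma lower nx ny nz d : nx^2+ny^2+nz^2 <= 1 -> is_decomposition (bloch nx ny nz) d ->
  h ((1 + sqrt (1 - Cz nx ny nz ^ 2)) / 2) <= avg_RI d.
Proof.
  intros Hn [Hpos [Hsum Hmat]].
  pose proof ln2_pos as Hl2.
  fold (sump d) in Hsum.
  change (avg_RI d) with (wsum RI_pure d).
  set (r := Cz nx ny nz).
  assert (Hr2 : r^2 = nx^2+ny^2) by (unfold r, Cz; apply pow2_sqrt; nra).
  assert (Hr0 : 0 <= r) by apply sqrt_pos.
  assert (Hr1 : r <= 1) by nra.
  assert (Hkey : r <= wsum Gc d).
  { pose proof (norm_ens d (fun e He => Rlt_le _ _ (proj1 (Hpos e He)))) as Hn'.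
    rewrite Hmat, bloch_bl in Hn'. simpl in Hn'. rewrite Cnorm_half in Hn'.
    unfold Gc. rewrite wsum_scal. unfold r, Cz. lra. }
  assert (HRI : forall e, In e d -> RI_pure (snd e) = Hs (sel (snd e)) / ln 2)
    by (intros; apply RI_sel, Hpos; assumption).
  assert (HG : forall e, In e d -> Gc (snd e) = sqrt (1 - sel (snd e) ^ 2))
    by (intros; apply Gc_sel, Hpos; assumption).
  assert (Hsel : forall e, In e d -> 0 <= sel (snd e) <= 1)
    by (intros; apply unit_elem, Hpos; assumption).
  rewrite h_Hs.
  destruct (Req_dec r 0) as [R0|R0]; [|destruct (Req_dec r 1) as [R1|R1]].
  -
    rewrite R0. replace (1 - 0^2) with 1 by ring. rewrite sqrt_1.
    unfold An.Hs. replace ((1+1)/2) with 1 by field. replace ((1-1)/2) with 0 by field.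
    rewrite (An.N_nonpos_arg 0) by lra. unfold An.N at 1. rewrite ln_1.
    replace ((- (1 * 0) + 0) / ln 2) with 0 by (field; lra).
    apply wsum_nonneg. intros e He. split; [apply Hpos; assumption|].
    rewrite HRI by assumption. apply Rmult_le_pos; [|left; apply Rinv_0_lt_compat; lra].
    destruct (Hpos e He) as [_ Hu]. destruct (unit_elem _ Hu) as [_ [E _]]. rewrite E.
    unfold is_unit_vec in Hu. pose proof (Cnorm2_nonneg (snd e false)).
    pose proof (Cnorm2_nonneg (snd e true)).
    apply Rplus_le_le_0_compat; apply An.N_nonneg; lra.
  -
    rewrite R1. replace (1 - 1^2) with 0 by ring. rewrite sqrt_0.
    assert (Hz : forall e, In e d -> (fun psi => 1 - Gc psi) (snd e) = 0).
    { apply (wsum_zero d (fun psi => 1 - Gc psi)).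
      - intros e He. split; [apply Hpos; assumption|]. simpl. rewrite HG by assumption.
        assert (sqrt (1 - sel (snd e) ^ 2) <= 1).
        { apply Rle_trans with (sqrt 1); [apply sqrt_le_1_alt; pose proof (Hsel e He); nra|rewrite sqrt_1; lra]. }
        lra.
      - rewrite wsum_1m. lra. }
    replace (Hs 0 / ln 2) with (Hs 0 / ln 2 * sump d + 0 * (wsum Gc d - 1 * sump d)) by (rewrite Hsum; ring).
    apply wsum_lower. intros e He. split; [apply Hpos; assumption|].
    specialize (Hz e He). simpl in Hz. rewrite HG in Hz by assumption.
    rewrite HRI by assumption.
    assert (Hs0 : sel (snd e) = 0).
    { pose proof (Hsel e He).
      assert (1 - sel (snd e) ^2 = 1).
      { assert (E1 : sqrt (1 - sel (snd e) ^ 2) = 1) by lra.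
        rewrite <- (sqrt_sqrt (1 - sel (snd e)^2)) by nra. rewrite E1. ring. }
      nra. }
    rewrite Hs0. lra.
  -
    set (t := sqrt (1 - r^2)).
    assert (Ht : 0 < t < 1).
    { unfold t. split. apply sqrt_lt_R0. nra.
      apply Rlt_le_trans with (sqrt 1); [apply sqrt_lt_1_alt; nra|rewrite sqrt_1; lra]. }
    assert (Htr : sqrt (1 - t^2) = r).
    { unfold t. rewrite pow2_sqrt by nra. replace (1 - (1 - r^2)) with (r^2) by ring.
      apply sqrt_pow2; lra. }
    pose proof (An.kt_nonneg t Ht) as Hk.
    apply Rle_trans with (Hs t / ln 2 * sump d + (An.kt t / ln 2) * (wsum Gc d - r * sump d)).
    + rewrite Hsum. assert (0 <= An.kt t / ln 2 * (wsum Gc d - r)).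
      { apply Rmult_le_pos; [|lra]. unfold Rdiv. apply Rmult_le_pos; [lra|left; apply Rinv_0_lt_compat; lra]. }
      lra.
    + apply wsum_lower. intros e He. split; [apply Hpos; assumption|].
      rewrite HRI, HG by assumption.
      pose proof (An.tangent t (sel (snd e)) Ht (Hsel e He)) as T.
      rewrite Htr in T.
      apply (Rmult_le_reg_r (ln 2)); [lra|].
      replace ((Hs t / ln 2 + An.kt t / ln 2 * (sqrt (1 - sel (snd e) ^ 2) - r)) * ln 2)
        with (Hs t + An.kt t * (sqrt (1 - sel (snd e) ^ 2) - r)) by (field; lra).
      replace (Hs (sel (snd e)) / ln 2 * ln 2) with (Hs (sel (snd e))) by (field; lra).
      exact T.
Qed.

Definition rr (ux uy : R) := sqrt (ux^2 + uy^2).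
Definition ex (ux uy : R) := if Rlt_dec 0 (rr ux uy) then ux / rr ux uy else 1.
Definition ey (ux uy : R) := if Rlt_dec 0 (rr ux uy) then uy / rr ux uy else 0.

Lemma phase ux uy : ex ux uy ^2 + ey ux uy ^2 = 1 /\ rr ux uy * ex ux uy = ux /\ rr ux uy * ey ux uy = uy.
Proof.
  assert (Hr2 : rr ux uy ^2 = ux^2+uy^2) by (unfold rr; apply pow2_sqrt; nra).
  unfold ex, ey. destruct (Rlt_dec 0 (rr ux uy)) as [H|H].
  - split; [|split]; [|field; lra|field; lra].
    replace ((ux / rr ux uy) ^ 2 + (uy / rr ux uy) ^ 2) with ((ux^2+uy^2) / rr ux uy ^2) by (field; lra).
    rewrite <- Hr2. field. lra.
  - assert (rr ux uy = 0) by (pose proof (sqrt_pos (ux^2+uy^2)); unfold rr in *; lra).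
    rewrite H0 in Hr2. assert (ux = 0) by nra. assert (uy = 0) by nra. subst.
    split; [|split]; ring_simplify; lra.
Qed.

Definition bvec (ux uy uz : R) : Vec2 := fun b =>
  if b then (sqrt ((1-uz)/2) * ex ux uy, sqrt ((1-uz)/2) * ey ux uy)
  else (sqrt ((1+uz)/2), 0).

Lemma bvec_mat ux uy uz : ux^2+uy^2+uz^2 = 1 ->
  forall i j, Cmul (bvec ux uy uz i) (Cconj (bvec ux uy uz j)) = bl ux uy uz i j.
Proof.
  intros Hu. destruct (phase ux uy) as [P1 [P2 P3]].
  assert (Hz : -1 <= uz <= 1) by nra.
  set (A := sqrt ((1+uz)/2)). set (B := sqrt ((1-uz)/2)).
  assert (HA : A * A = (1+uz)/2) by (apply sqrt_sqrt; lra).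
  assert (HB : B * B = (1-uz)/2) by (apply sqrt_sqrt; lra).
  assert (HAB : A * B = rr ux uy / 2).
  { unfold A, B, rr. rewrite <- sqrt_mult by lra. rewrite <- sqrt_div4 by nra. f_equal.
    field_simplify. nra. }
  intros i j; destruct i, j; unfold bvec, bl, Cmul, Cconj; simpl; fold A B; apply pair_eq.
  - rewrite <- HB. ring_simplify. replace (B^2 * ex ux uy ^2 + B^2 * ey ux uy ^2) with (B^2 * (ex ux uy ^2 + ey ux uy ^2)) by ring. rewrite P1. ring.
  - ring.
  - replace (B * ex ux uy * A - B * ey ux uy * - 0) with ((A * B) * ex ux uy) by ring.
    rewrite HAB. nra.
  - replace (B * ex ux uy * - 0 + B * ey ux uy * A) with ((A * B) * ey ux uy) by ring.
    rewrite HAB. nra.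
  - replace (A * (B * ex ux uy) - 0 * - (B * ey ux uy)) with ((A * B) * ex ux uy) by ring.
    rewrite HAB. nra.
  - replace (A * - (B * ey ux uy) + 0 * (B * ex ux uy)) with (- ((A * B) * ey ux uy)) by ring.
    rewrite HAB. nra.
  - rewrite <- HA. ring.
  - ring.
Qed.

Lemma Cnorm2_diag z : Cnorm2 z = fst (Cmul z (Cconj z)).
Proof. unfold Cnorm2, Cmul, Cconj; simpl. ring. Qed.

Lemma bvec_norms ux uy uz : ux^2+uy^2+uz^2 = 1 ->
  Cnorm2 (bvec ux uy uz false) = (1+uz)/2 /\ Cnorm2 (bvec ux uy uz true) = (1-uz)/2.
Proof.
  intros Hu. rewrite !Cnorm2_diag, !bvec_mat by assumption. simpl. auto.
Qed.

Lemma bvec_unit ux uy uz : ux^2+uy^2+uz^2 = 1 -> is_unit_vec (bvec ux uy uz).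
Proof. intros Hu. unfold is_unit_vec. destruct (bvec_norms _ _ _ Hu) as [-> ->]. field. Qed.

Lemma bvec_RI ux uy uz : ux^2+uy^2+uz^2 = 1 -> RI_pure (bvec ux uy uz) = Hs uz / ln 2.
Proof.
  intros Hu. rewrite RI_pure_N. destruct (bvec_norms _ _ _ Hu) as [-> ->]. reflexivity.
Qed.

Lemma upper nx ny nz : nx^2+ny^2+nz^2 <= 1 ->
  exists d, is_decomposition (bloch nx ny nz) d /\
    avg_RI d = h ((1 + sqrt (1 - Cz nx ny nz ^ 2)) / 2).
Proof.
  intros Hn. pose proof ln2_pos as Hl2.
  assert (Hr2 : Cz nx ny nz ^2 = nx^2+ny^2) by (unfold Cz; apply pow2_sqrt; nra).
  rewrite Hr2, h_Hs.
  destruct (Req_dec (nx^2+ny^2+nz^2) 1) as [E|E].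
  - exists ((1, bvec nx ny nz) :: nil). split; [split; [|split]|].
    + intros e [<-|[]]. split; [simpl; lra|apply bvec_unit; assumption].
    + simpl. ring.
    + intros i j. unfold ens_mat. simpl. rewrite bvec_mat by assumption. rewrite bloch_bl.
      destruct i, j; unfold bl, RtoC, Cmul, Cadd, C0; simpl; apply pair_eq; ring.
    + replace (1 - (nx^2+ny^2)) with (nz^2) by lra.
      unfold avg_RI. cbn [fold_right fst snd]. rewrite bvec_RI by assumption.
      destruct (Rle_dec 0 nz).
      * rewrite sqrt_pow2 by lra. lra.
      * replace (nz^2) with ((-nz)^2) by ring. rewrite sqrt_pow2 by lra. rewrite Hs_even. lra.
  - set (t := sqrt (1 - (nx^2+ny^2))).
    assert (Ht2 : t^2 = 1 - (nx^2+ny^2)) by (unfold t; apply pow2_sqrt; nra).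
    assert (Ht0 : 0 <= t) by apply sqrt_pos.
    assert (Hnz : nz^2 < t^2) by lra.
    assert (Htp : 0 < t) by nra.
    assert (Hnzt : - t < nz < t) by (split; nra).
    set (p := (1 + nz / t) / 2).
    assert (Hp : 0 < p < 1).
    { unfold p. assert (-1 < nz / t < 1).
      { split; [apply (Rmult_lt_reg_r t)|apply (Rmult_lt_reg_r t)]; try lra;
        unfold Rdiv; rewrite Rmult_assoc, Rinv_l by lra; lra. }
      lra. }
    assert (U1 : nx^2+ny^2+t^2 = 1) by lra.
    assert (U2 : nx^2+ny^2+(-t)^2 = 1) by lra.
    exists ((p, bvec nx ny t) :: (1 - p, bvec nx ny (-t)) :: nil). split; [split; [|split]|].
    + intros e [<-|[<-|[]]]; simpl; (split; [lra|apply bvec_unit; assumption]).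
    + simpl. ring.
    + intros i j. unfold ens_mat. simpl. rewrite !bvec_mat by assumption. rewrite bloch_bl.
      destruct i, j; unfold bl, RtoC, Cmul, Cadd, C0; simpl; apply pair_eq; unfold p; field; lra.
    + unfold avg_RI. cbn [fold_right fst snd]. rewrite !bvec_RI by assumption. rewrite Hs_even. fold t. field. lra.
Qed.

Lemma Csub_self z : Csub z z = C0.
Proof. destruct z; unfold Csub, Cadd, Copp, C0; simpl; apply pair_eq; ring. Qed.
Lemma Cmul_0l z : Cmul C0 z = C0.
Proof. destruct z; unfold Cmul, C0; simpl; apply pair_eq; ring. Qed.
Lemma Cmul_0r z : Cmul z C0 = C0.
Proof. destruct z; unfold Cmul, C0; simpl; apply pair_eq; ring. Qed.
Lemma Csub_zero z w : Csub z w = C0 -> z = w.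
Proof.
  destruct z as [a b], w as [c d]. unfold Csub, Cadd, Copp, C0; simpl. intros H.
  injection H as H1 H2. apply pair_eq; lra.
Qed.

Lemma root_in e1 e2 x y :
  (forall lam, Cmul (Csub lam e1) (Csub lam e2) = Cmul (Csub lam x) (Csub lam y)) ->
  (e1 = x \/ e1 = y).
Proof.
  intros H. specialize (H e1). rewrite Csub_self, Cmul_0l in H.
  symmetry in H. apply Cmul_zero in H. destruct H as [H|H]; apply Csub_zero in H; auto.
Qed.

Lemma roots_case e1 e2 x y :
  (forall lam, Cmul (Csub lam e1) (Csub lam e2) = Cmul (Csub lam x) (Csub lam y)) ->
  (e1 = x /\ e2 = y) \/ (e1 = y /\ e2 = x) \/ (e1 = x /\ e2 = x /\ x = y).
Proof.
  intros H.
  assert (H2 : forall lam, Cmul (Csub lam e2) (Csub lam e1) = Cmul (Csub lam x) (Csub lam y)).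
  { intros lam. rewrite <- H. destruct (Csub lam e1), (Csub lam e2). unfold Cmul; simpl; apply pair_eq; ring. }
  destruct (root_in _ _ _ _ H) as [A|A]; destruct (root_in _ _ _ _ H2) as [B|B]; subst.
  - right; right. specialize (H y). rewrite Csub_self, Cmul_0r in H.
    apply Cmul_zero in H. destruct H as [H|H]; apply Csub_zero in H; auto.
  - left; auto.
  - right; left; auto.
  - right; right. specialize (H x). rewrite Csub_self, Cmul_0l in H.
    apply Cmul_zero in H. destruct H as [H|H]; apply Csub_zero in H; subst; auto.
Qed.

Lemma quad_form a b x y : Cmul (Csub (a,b) (x,0)) (Csub (a,b) (y,0)) =
  (a*a - b*b - a*(x+y) + x*y, 2*a*b - b*(x+y)).
Proof. unfold Cmul, Csub, Cadd, Copp; simpl; apply pair_eq; ring. Qed.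

Definition Mrho (nx ny nz : R) :=
  mmul (mmul (mmul (bloch nx ny nz) sigma_x) (mconj (bloch nx ny nz))) sigma_x.

Lemma mmul_sx (A : Mat2) i j : mmul A sigma_x i j = A i (negb j).
Proof.
  unfold mmul, sigma_x. destruct j; cbn [Bool.eqb negb];
  destruct (A i false) as [p q], (A i true) as [u v];
  unfold Cmul, Cadd, C0, Defs.C1; cbn [fst snd]; apply pair_eq; ring.
Qed.

Lemma Mrho_entry nx ny nz i j : Mrho nx ny nz i j =
  Cadd (Cmul (bl nx ny nz i true) (Cconj (bl nx ny nz false (negb j))))
       (Cmul (bl nx ny nz i false) (Cconj (bl nx ny nz true (negb j)))).
Proof.
  unfold Mrho. rewrite mmul_sx. unfold mmul at 1. rewrite !mmul_sx. unfold mconj.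
  rewrite !bloch_bl. reflexivity.
Qed.

Lemma charpoly nx ny nz a b :
  mdet (madd (mscale (a,b) mid) (mscale (Copp Defs.C1) (Mrho nx ny nz))) =
  (a*a - b*b - a*((1 - nz^2 + nx^2 + ny^2)/2) + ((1 - nz^2 - nx^2 - ny^2)/4)^2,
   2*a*b - b*((1 - nz^2 + nx^2 + ny^2)/2)).
Proof.
  unfold mdet, madd, mscale, mid. rewrite !Mrho_entry. cbn [negb Bool.eqb bl].
  unfold Csub, Cadd, Copp, Cmul, Cconj, C0, Defs.C1. cbn [fst snd].
  apply pair_eq; field.
Qed.

Lemma eigen_part nx ny nz : nx^2+ny^2+nz^2 <= 1 ->
  forall eta1 eta2 : Cx,
     eigenpair (mmul (mmul (mmul (bloch nx ny nz) sigma_x) (mconj (bloch nx ny nz))) sigma_x)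
               eta1 eta2 ->
     Cim eta1 = 0 /\ Cim eta2 = 0 /\ 0 <= Cre eta1 /\ 0 <= Cre eta2 /\
     Cz nx ny nz = Rabs (sqrt (Cre eta1) - sqrt (Cre eta2)).
Proof.
  intros Hn eta1 eta2 Heig.
  set (r := Cz nx ny nz). set (s := sqrt (1 - nz^2)).
  assert (Hr2 : r^2 = nx^2+ny^2) by (unfold r, Cz; apply pow2_sqrt; nra).
  assert (Hs2 : s^2 = 1 - nz^2) by (unfold s; apply pow2_sqrt; nra).
  assert (Hr0 : 0 <= r) by apply sqrt_pos.
  assert (Hs0 : 0 <= s) by apply sqrt_pos.
  assert (Hrs : r <= s) by (unfold r, s, Cz; apply sqrt_le_1_alt; lra).
  set (lp := (((s+r)/2)^2, 0)). set (lm := (((s-r)/2)^2, 0)).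
  assert (Hc : forall lam, Cmul (Csub lam eta1) (Csub lam eta2) = Cmul (Csub lam lp) (Csub lam lm)).
  { intros [a b]. rewrite <- (Heig (a,b)). fold (Mrho nx ny nz). rewrite charpoly.
    unfold lp, lm. rewrite quad_form. apply pair_eq.
    - replace (((s + r) / 2) ^ 2 + ((s - r) / 2) ^ 2) with ((s^2 + r^2)/2) by field.
      replace (((s + r) / 2) ^ 2 * ((s - r) / 2) ^ 2) with (((s^2 - r^2)/4)^2) by field.
      rewrite Hs2, Hr2. field.
    - replace (((s + r) / 2) ^ 2 + ((s - r) / 2) ^ 2) with ((s^2 + r^2)/2) by field.
      rewrite Hs2, Hr2. field. }
  assert (Sp : sqrt (((s+r)/2)^2) = (s+r)/2) by (apply sqrt_pow2; lra).
  assert (Sm : sqrt (((s-r)/2)^2) = (s-r)/2) by (apply sqrt_pow2; lra).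
  assert (Pp : 0 <= ((s+r)/2)^2) by nra.
  assert (Pm : 0 <= ((s-r)/2)^2) by nra.
  destruct (roots_case _ _ _ _ Hc) as [[-> ->]|[[-> ->]|[-> [-> Hxy]]]];
    unfold lp, lm, Cre, Cim; cbn [fst snd]; rewrite ?Sp, ?Sm.
  - repeat split; try lra. rewrite Rabs_right by lra. lra.
  - repeat split; try lra. rewrite Rabs_left1 by lra. lra.
  - repeat split; try lra. rewrite Rminus_diag, Rabs_R0.
    unfold lp, lm in Hxy. injection Hxy as Hxy.
    assert (s * r = 0) by nra. apply Rmult_integral in H. lra.
Qed.

Lemma cl1_part nx ny nz : Cz nx ny nz = Cl1 (bloch nx ny nz).
Proof.
  unfold Cl1. rewrite !bloch_bl. simpl. rewrite Cnorm_half, Cnorm_half'. unfold Cz. field.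
Qed.

Theorem mainTheorem7 (nx ny nz : R) (Hn : nx ^ 2 + ny ^ 2 + nz ^ 2 <= 1) :
  RI_is (bloch nx ny nz) (h ((1 + sqrt (1 - (Cz nx ny nz) ^ 2)) / 2)) /\
  (forall eta1 eta2 : Cx,
     eigenpair (mmul (mmul (mmul (bloch nx ny nz) sigma_x) (mconj (bloch nx ny nz))) sigma_x)
               eta1 eta2 ->
     Cim eta1 = 0 /\ Cim eta2 = 0 /\ 0 <= Cre eta1 /\ 0 <= Cre eta2 /\
     Cz nx ny nz = Rabs (sqrt (Cre eta1) - sqrt (Cre eta2))) /\
  Cz nx ny nz = Cl1 (bloch nx ny nz).
Proof.
  split; [|split].
  - split.
    + apply upper; assumption.
    + intros d Hd. apply lower; assumption.
  - apply eigen_part; assumption.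
  - apply cl1_part.
Qed.
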